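(* Let $T=(V,E)$ be a finite rooted tree with nonnegative partial costs, $\Pr$ a probability distribution over a finite set of queries, and $k$ a positive integer with $k\le|V|$. Let $R_g$ be the output of the greedy algorithm that starts with $R=\emptyset$ and, while $|R|<k$, adds to $R$ a node $u\in V\setminus R$ maximizing $B(R\cup\{u\})-B(R)$. Then $$B(R_g)\ge\Big(1-\frac1e\Big)\max_{R\subseteq V,\ |R|\le k}B(R).$$
   Context: $T=(V,E)$ is a finite rooted tree; $T(u)$ is the set of nodes of the subtree rooted at $u$ (including $u$); $A(u)$ the set of proper ancestors of $u$. Each non-leaf node is associated with a variable of a finite set $X$; $\mathrm{vars}(u)$ is the set of variables of nodes of $T(u)$; each query $q$ determines $Z_q\subseteq X$. For $R\subseteq V$, $w\in V$: $I_q(w,R)=1$ iff $w\in R$, $\mathrm{vars}(w)\subseteq Z_q$, and no $x\in A(w)\cap R$ has $\mathrm{vars}(x)\subseteq Z_q$; else $0$; $\mathbb{E}[I(w,R)]=\sum_q\Pr(q)I_q(w,R)$. Each node $x$ has partial cost $c(x)\ge0$, total cost $C(w)=\sum_{x\in T(w)}c(x)$. Benefit: $B(R)=\sum_{w\in R}\mathbb{E}[I(w,R)]C(w)$. *)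

(* Defs.v *)
From HB Require Import structures.
From mathcomp Require Import all_boot all_order all_algebra.
From mathcomp Require Import reals.
From mathcomp Require Import sequences.
Set Implicit Arguments. Unset Strict Implicit. Unset Printing Implicit Defensive.
Import Order.TTheory GRing.Theory Num.Theory.
Local Open Scope ring_scope.

Section Defs.
Variable V : finType.

Definition is_rooted_tree (r : V) (par : V -> V) : Prop :=
  par r = r /\ forall v : V, exists n : nat, iter n par v = r.

Definition subtree (par : V -> V) (u : V) : {set V} :=
  [set w | fconnect par w u].

Definition ancestors (par : V -> V) (u : V) : {set V} :=
  [set x | fconnect par u x & x != u].

Definition is_leaf (par : V -> V) (u : V) : bool :=
  ~~ [exists w, (w != u) && (par w == u)].

Variable X : finType.

Definition vars (par : V -> V) (var : V -> X) (u : V) : {set X} :=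
  [set var x | x in [set x in subtree par u | ~~ is_leaf par x]].

Variable Q : finType.
Variable R : realType.

Definition Iq (par : V -> V) (var : V -> X) (Z : Q -> {set X})
    (q : Q) (w : V) (S : {set V}) : bool :=
  [&& w \in S, vars par var w \subset Z q &
      ~~ [exists x in ancestors par w :&: S, vars par var x \subset Z q]].

Definition EI (par : V -> V) (var : V -> X) (Z : Q -> {set X}) (P : Q -> R)
    (w : V) (S : {set V}) : R :=
  \sum_(q : Q) P q * (Iq par var Z q w S)%:R.

Definition Ctot (par : V -> V) (c : V -> R) (w : V) : R :=
  \sum_(x in subtree par w) c x.

Definition benefit (par : V -> V) (var : V -> X) (Z : Q -> {set X})
    (P : Q -> R) (c : V -> R) (S : {set V}) : R :=
  \sum_(w in S) EI par var Z P w S * Ctot par c w.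

(* Ties may be broken arbitrarily. *)
Definition greedy_run (B : {set V} -> R) (s : seq V) : Prop :=
  forall (p : seq V) (u : V) (t : seq V), s = p ++ u :: t ->
    let Ri := [set x in p] in
    u \notin Ri /\
    forall v : V, v \notin Ri -> B (v |: Ri) - B Ri <= B (u |: Ri) - B Ri.
End Defs.

(* Main.v *)
Require Import Defs.
From HB Require Import structures.
From mathcomp Require Import all_boot all_order all_algebra.
From mathcomp Require Import reals.
From mathcomp Require Import sequences.
From mathcomp Require Import exp ring lra.
Import Order.TTheory GRing.Theory Num.Theory.
Local Open Scope ring_scope.
Set Implicit Arguments. Unset Strict Implicit.

Section Tree.
Variable V : finType.
Variables (r : V) (par : V -> V).
Hypothesis tree : is_rooted_tree r par.

Lemma iter_root n : iter n par r = r.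
Proof. case: tree => hr _; elim: n => //= n ->; exact: hr. Qed.

Lemma iter_mul a m j : iter m par a = a -> iter (j * m) par a = a.
Proof.
move=> h; elim: j => [|j IH] //=; by rewrite mulSn iterD IH h.
Qed.

Lemma fconnect_antisym a b : fconnect par a b -> fconnect par b a -> a = b.
Proof.
move=> /iter_findex hab /iter_findex hba.
set m := findex par a b in hab; set n := findex par b a in hba.
have cyc : iter (n + m) par a = a by rewrite iterD hab hba.
case: tree => _ /(_ a) [N hN].
case: (posnP (n + m)) => [nm0|nmpos].
  have m0 : m = 0%N by move/eqP: nm0; rewrite addn_eq0 => /andP [_ /eqP].
  by rewrite -hab m0.
have ar : a = r.
  have := @iter_mul a (n + m) N cyc.
  have le : (N <= N * (n + m))%N by rewrite leq_pmulr.
  by rewrite -(subnK le) iterD hN iter_root => <-.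
by rewrite -hab ar iter_root.
Qed.

Lemma fconnect_total x a b : fconnect par x a -> fconnect par x b ->
  fconnect par a b || fconnect par b a.
Proof.
move=> /iter_findex ha /iter_findex hb.
set i := findex par x a in ha; set j := findex par x b in hb.
case: (leqP i j) => hij.
  by rewrite -ha -hb -(subnK hij) iterD fconnect_iter.
by rewrite -ha -hb -(subnK (ltnW hij)) iterD fconnect_iter orbT.
Qed.
End Tree.
Section Cov.
Variables (V X Q : finType) (R : realType).
Variables (r : V) (par : V -> V) (var : V -> X) (Z : Q -> {set X}) (P : Q -> R) (c : V -> R).
Hypothesis tree : is_rooted_tree r par.

Definition D q w := vars par var w \subset Z q.
Definition cov q x (A : {set V}) := [exists w in A, D q w && (x \in subtree par w)].

Lemma Iq_unique q x S w1 w2 :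
  Iq par var Z q w1 S && (x \in subtree par w1) ->
  Iq par var Z q w2 S && (x \in subtree par w2) -> w1 = w2.
Proof.
wlog: w1 w2 / fconnect par w1 w2.
  move=> H h1 h2; move: (h1) (h2) => /andP [_ x1] /andP [_ x2].
  rewrite inE in x1; rewrite inE in x2.
  case/orP: (fconnect_total x1 x2) => h; first exact: H.
  by symmetry; apply: H.
move=> c12 /andP [/and3P [in1 D1 nex] _] /andP [/and3P [in2 D2 _] _].
apply/eqP; apply: contraNT nex => ne.
apply/existsP; exists w2. rewrite !inE in2 D2 andbT andbT eq_sym ne andbT. exact: c12.
Qed.

Lemma Iq_exists (q : Q) (x : V) (S : {set V}) : cov q x S ->
  exists w, (w \in S) && Iq par var Z q w S && (x \in subtree par w).
Proof.
move=> /existsP [w0 /and3P [w0S Dw0 xw0]].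
set C := [set w in S | D q w && (x \in subtree par w)].
have w0C : w0 \in C by rewrite inE w0S Dw0 xw0.
case: (@arg_maxnP _ w0 (fun w => w \in C) (fun w => #|subtree par w|) w0C) => w wC wmax.
move: (wC); rewrite /C inE => /andP [wS /andP [Dw xw]]; rewrite /D in Dw.
exists w; rewrite wS xw /= andbT /Iq wS Dw /=.
apply/existsP => -[a /andP [aAS Da]].
move: aAS; rewrite inE => /andP [aA aS]; move: aA; rewrite inE => /andP [wa naw].
have aC : a \in C.
  rewrite /C inE aS /D Da /=; rewrite inE in xw; rewrite inE.
  exact: connect_trans xw wa.
have := wmax a aC; rewrite /= leqNgt => /negP; apply; apply: proper_card.
apply/properP; split.
  apply/subsetP => y; rewrite !inE => yw; exact: connect_trans yw wa.
exists a; first by rewrite inE connect0.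
rewrite inE; apply/negP => aw.
by move/negP: naw; apply; apply/eqP; apply: (fconnect_antisym tree).
Qed.

Lemma count_eq (q : Q) (x : V) (S : {set V}) :
  \sum_(w in S) ((Iq par var Z q w S && (x \in subtree par w))%:R : R)
  = (cov q x S)%:R.
Proof.
case: (boolP (cov q x S)) => hc.
  have [w /andP [/andP [wS Iw] xw]] := Iq_exists hc.
  rewrite (bigD1 w) //= Iw xw /= big1 ?addr0 // => v /andP [vS vw].
  case: (boolP (Iq par var Z q v S && (x \in subtree par v))) => // hv.
  by rewrite (Iq_unique hv (introT andP (conj Iw xw))) eqxx in vw.
rewrite big1 // => w wS.
case: (boolP (Iq par var Z q w S && (x \in subtree par w))) => // /andP [/and3P [_ Dw _] xw].
by move/negP: hc; case; apply/existsP; exists w; rewrite wS /D Dw xw.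
Qed.

Lemma benefitE (S : {set V}) : benefit par var Z P c S =
  \sum_(q : Q) P q * \sum_(x : V) c x * (cov q x S)%:R.
Proof.
rewrite /benefit /EI.
under eq_bigr => w _ do rewrite mulr_suml.
rewrite exchange_big /=; apply: eq_bigr => q _.
rewrite mulr_sumr.
under eq_bigr => w _ do rewrite /Ctot big_mkcond /= mulr_sumr.
rewrite exchange_big /=; apply: eq_bigr => x _.
rewrite -count_eq !mulr_sumr; apply: eq_bigr => w _.
case: (x \in subtree par w); case: (Iq par var Z q w S);
  by rewrite /= ?andbF ?andbT ?mulr0 ?mul0r ?mulr1.
Qed.
End Cov.
Section Greedy.
Variables (V X Q : finType) (R : realType).
Variables (r : V) (par : V -> V) (var : V -> X) (Z : Q -> {set X}) (P : Q -> R) (c : V -> R).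
Hypothesis c_ge0 : forall x, 0 <= c x.
Hypothesis P_ge0 : forall q, 0 <= P q.

Definition L (g : Q -> V -> R) := \sum_(q : Q) P q * \sum_(x : V) c x * g q x.
Definition F (A : {set V}) := L (fun q x => (cov par var Z q x A)%:R).

Lemma L_le g h : (forall q x, g q x <= h q x) -> L g <= L h.
Proof.
move=> H; apply: ler_sum => q _; apply: ler_wpM2l => //.
apply: ler_sum => x _; exact: ler_wpM2l.
Qed.

Lemma L_sub g h : L g - L h = L (fun q x => g q x - h q x).
Proof.
rewrite /L -sumrB; apply: eq_bigr => q _; rewrite -mulrBr -sumrB.
congr (_ * _); apply: eq_bigr => x _; by rewrite mulrBr.
Qed.

Lemma L_sum (B : {set V}) (g : V -> Q -> V -> R) :
  \sum_(v in B) L (g v) = L (fun q x => \sum_(v in B) g v q x).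
Proof.
rewrite /L exchange_big /=; apply: eq_bigr => q _.
rewrite -mulr_sumr; congr (_ * _); rewrite exchange_big /=.
apply: eq_bigr => x _; by rewrite mulr_sumr.
Qed.

Lemma cov_mono q x (A B : {set V}) : A \subset B -> cov par var Z q x A -> cov par var Z q x B.
Proof.
move=> /subsetP AB /existsP [w /andP [wA h]]; apply/existsP; exists w.
by rewrite AB.
Qed.

Lemma F_ge0 A : 0 <= F A.
Proof.
apply: sumr_ge0 => q _; apply: mulr_ge0 => //; apply: sumr_ge0 => x _.
exact: mulr_ge0.
Qed.

Lemma F_mono (A B : {set V}) : A \subset B -> F A <= F B.
Proof.
move=> AB; apply: L_le => q x.
case: (boolP (cov par var Z q x A)) => h; last by rewrite ler0n.
by rewrite (cov_mono AB h).
Qed.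

Lemma F_sub (A B : {set V}) :
  F (A :|: B) - F A <= \sum_(v in B) (F (v |: A) - F A).
Proof.
under eq_bigr => v _ do rewrite /F L_sub.
rewrite /F L_sub L_sum; apply: L_le => q x.
case: (boolP (cov par var Z q x A)) => hA.
  rewrite (cov_mono (subsetUl A B) hA) subrr.
  rewrite big1 // => v _; by rewrite (cov_mono (subsetUr _ A) hA) subrr.
rewrite subr0; under eq_bigr => v _ do rewrite subr0.
case: (boolP (cov par var Z q x (A :|: B))) => hAB; last first.
  by apply: sumr_ge0 => v _; rewrite ler0n.
move: (hAB) => /existsP [w /andP [wAB /andP [Dw xw]]].
have wB : w \in B.
  move: wAB; rewrite inE => /orP [wA|//].
  by move/negP: hA; case; apply/existsP; exists w; rewrite wA Dw xw.
have cw : cov par var Z q x (w |: A).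
  by apply/existsP; exists w; rewrite in_setU1 eqxx /=; apply/andP.
rewrite (bigD1 w) //= cw lerDl; apply: sumr_ge0 => v _; by rewrite ler0n.
Qed.
End Greedy.

Theorem theorem3 (R : realType) (V X Q : finType) (r : V) (par : V -> V)
    (var : V -> X) (Z : Q -> {set X}) (P : Q -> R) (c : V -> R) (k : nat)
    (s : seq V) :
  is_rooted_tree r par ->
  (forall x : V, 0 <= c x) ->
  (forall q : Q, 0 <= P q) -> \sum_(q : Q) P q = 1 ->
  (0 < k)%N -> (k <= #|V|)%N ->
  size s = k -> greedy_run (benefit par var Z P c) s ->
  forall S : {set V}, (#|S| <= k)%N ->
    (1 - (expR 1)^-1) * benefit par var Z P c S
      <= benefit par var Z P c [set x in s].
Proof.
move=> tree c0 P0 _ k0 _ hs gr S hS.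
have BE : forall A, benefit par var Z P c A = F par var Z P c A.
  by move=> A; rewrite (benefitE _ _ _ _ tree).
set f := F par var Z P c.
have f0 : forall A, 0 <= f A by move=> A; apply: F_ge0.
have fm : forall A B : {set V}, A \subset B -> f A <= f B by move=> A B; apply: F_mono.
have fs : forall A B : {set V}, f (A :|: B) - f A <= \sum_(v in B) (f (v |: A) - f A).
  by move=> A B; apply: F_sub.
rewrite !BE -/f.
pose Ri i := [set x in take i s].
have step : forall i, (i < k)%N ->
    f S - f (Ri i) <= k%:R * (f (Ri i.+1) - f (Ri i)).
  move=> i ik.
  have ik' : (i < size s)%N by rewrite hs.
  set u := nth r s i.
  have RiS : Ri i.+1 = u |: Ri i.
    by apply/setP => y; rewrite !inE (take_nth r ik') mem_rcons in_cons.
  have es : s = take i s ++ u :: drop i.+1 s by rewrite -(drop_nth r ik') cat_take_drop.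
  have [_ gmax] := gr (take i s) u (drop i.+1 s) es.
  rewrite /= in gmax; rewrite !BE -/f -/(Ri i) in gmax.
  set d := f (u |: Ri i) - f (Ri i).
  have d0 : 0 <= d by rewrite subr_ge0; apply: fm; apply: subsetUr.
  rewrite RiS -/d lerBlDl.
  apply: le_trans (fm S (Ri i :|: S) (subsetUr _ _)) _.
  rewrite -lerBlDl; apply: le_trans (fs (Ri i) S) _.
  apply: le_trans (_ : \sum_(v in S) d <= _).
    apply: ler_sum => v _; case: (boolP (v \in Ri i)) => hv.
      have -> : v |: Ri i = Ri i by apply/setUidPr; rewrite sub1set.
      by rewrite subrr.
    by move: (gmax v hv); rewrite BE.
  rewrite sumr_const -[d *+ _]mulr_natl; apply: ler_wpM2r => //.
  by rewrite ler_nat.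
have kpos : (0 : R) < k%:R by rewrite ltr0n.
pose a : R := 1 - k%:R^-1.
have a0 : 0 <= a by rewrite subr_ge0 invf_le1 // ler1n.
have contr : forall i, (i < k)%N -> f S - f (Ri i.+1) <= a * (f S - f (Ri i)).
  move=> i ik; have := step i ik.
  set g := f S - f (Ri i); set g' := f S - f (Ri i.+1).
  have -> : f (Ri i.+1) - f (Ri i) = g - g'.
    by rewrite /g /g'; ring.
  rewrite -ler_pdivrMl // => h.
  rewrite /a mulrBl mul1r lerBrDl -lerBrDr; exact: h.
have it : forall i, (i <= k)%N -> f S - f (Ri i) <= a ^+ i * f S.
  elim => [|i IH] hi.
    by rewrite expr0 mul1r; have := f0 (Ri 0); lra.
  apply: le_trans (contr i hi) _.
  rewrite exprS -mulrA; apply: ler_wpM2l => //; exact: IH (ltnW hi).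
have := it k (leqnn k).
have -> : Ri k = [set x in s] by rewrite /Ri -hs take_size.
have ae : a ^+ k <= (expR 1)^-1.
  have e1 : a <= expR (- k%:R^-1) by apply: expR_ge1Dx.
  apply: le_trans (lerXn2r k _ _ e1) _; rewrite ?nnegrE ?expR_ge0 //.
  rewrite -expRM_natl mulrN mulfV ?expRN //.
  by rewrite lt0r_neq0.
move=> h; rewrite mulrBl mul1r lerBlDl -lerBlDr.
apply: le_trans h _; apply: ler_wpM2r => //.
Qed.
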